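(* Let $p$ be an odd prime and $N=C_p\times D_{2p}$, with $C_p=\langle c\rangle$ and $D_{2p}=\langle r,s\mid r^p=s^2=1,\ srs=r^{-1}\rangle$. Let $\varphi\in\mathrm{Aut}(N)$ be given by $\varphi(r)=r,\ \varphi(s)=rs,\ \varphi(c)=c$. Then the $p^2-p$ subgroups $$A_{k,l}=\langle (r,\varphi^k),(c,\varphi^l)\rangle,\quad 0\le k\le p-2,\ 0\le l\le p-1,$$ are isomorphic to $C_p\times C_p$ and are precisely the semiregular subgroups of order $p^2$ of $\mathrm{Hol}(N)$.
   Context: $\mathrm{Hol}(N)=N\rtimes\mathrm{Aut}(N)$, with elements $(x,\varphi)$, product $(x,\varphi)(y,\psi)=(x\varphi(y),\varphi\psi)$, acting on $N$ by $(x,\varphi)\cdot n=x\varphi(n)$. A subgroup is semiregular if all stabilizers of points of $N$ under this action are trivial. *)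

(* Defs.v *)
From HB Require Import structures.
From mathcomp Require Import all_boot all_order all_algebra all_fingroup all_solvable.
Set Implicit Arguments. Unset Strict Implicit. Unset Printing Implicit Defensive.

Local Open Scope group_scope.

Section Holomorph.
Variable gT : finGroupType.

Definition lmulp (x : gT) : {perm gT} := perm (mulgI x).

(* the permutation of N = gT induced by the holomorph element (x, f):
   n |-> x * f n   (perm products compose left-to-right: (f * g) n = g (f n)) *)
Definition holp (x : gT) (f : {perm gT}) : {perm gT} := f * lmulp x.

Lemma holpE x f n : holp x f n = x * f n.
Proof. by rewrite /holp permM /lmulp permE. Qed.

(* Hol(N), realised faithfully as the permutation group
   { n |-> x f(n) | x in N, f in Aut N } acting on N = [set: gT] *)
Definition Hol : {set {perm gT}} :=
  [set holp x f | x in [set: gT], f in Aut [set: gT]].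

Definition hol_semiregular (H : {set {perm gT}}) : Prop :=
  forall (h : {perm gT}) (n : gT), h \in H -> h n = n -> h = 1.

Definition Akl (r c : gT) (phi : {perm gT}) (k l : nat) : {set {perm gT}} :=
  <<[set holp r (phi ^+ k); holp c (phi ^+ l)]>>.
End Holomorph.

Arguments Hol gT : clear implicits.
Arguments hol_semiregular {gT} H.
Arguments Akl {gT} r c phi k l.

(* Main.v *)
Require Import Defs.
From HB Require Import structures.
From mathcomp Require Import all_boot all_order all_algebra all_fingroup all_solvable all_field.
From mathcomp Require Import zify.
Set Implicit Arguments. Unset Strict Implicit. Unset Printing Implicit Defensive.

Lemma fermat p a : prime p -> a ^ p = a %[mod p].
Proof.
move=> pr.
have := expf_card (a%:R : 'F_p).
rewrite card_Fp // -GRing.natrX => /(congr1 val).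
by rewrite /= !val_Fp_nat.
Qed.

Section Main.
Local Open Scope group_scope.
Variables (p : nat) (gT : finGroupType) (c r s : gT) (phi : {perm gT}).
Hypotheses (pr_p : prime p) (odd_p : odd p)
  (dN : (<[c]> \x <<[set r; s]>>)%g = [set: gT])
  (oc : #[c] = p) (orr : #[r] = p) (os : #[s] = 2) (srs : s * r * s = r^-1)
  (Aphi : phi \in Aut [set: gT]) (phr : phi r = r) (phs : phi s = r * s) (phc : phi c = c).

Lemma p_gt1 : 1 < p. Proof. exact: prime_gt1. Qed.
Lemma p_gt0 : 0 < p. Proof. exact: prime_gt0. Qed.
Lemma p_gt2 : 2 < p.
Proof. have := p_gt1; case: p odd_p => [|[|[|]]] //. Qed.

Lemma s2 : s * s = 1.
Proof. by rewrite -expg2 -os expg_order. Qed.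
Lemma sV : s^-1 = s.
Proof. by apply/eqP; rewrite eq_invg_mul s2. Qed.
Lemma rp : r ^+ p = 1. Proof. by rewrite -orr expg_order. Qed.
Lemma cp : c ^+ p = 1. Proof. by rewrite -oc expg_order. Qed.
Lemma sp : s ^+ p = s.
Proof. by rewrite -(expg_mod_order s p) os modn2 odd_p expg1. Qed.

Lemma G_eq : <<[set r; s]>> = <[r]> * <[s]>.
Proof.
have nrs : <[s]> \subset 'N(<[r]>).
  rewrite cycle_subG; apply/normP.
  by rewrite -cycleJ conjgE sV mulgA srs cycleV.
rewrite -norm_joinEr //; apply/eqP; rewrite eqEsubset; apply/andP; split.
  rewrite gen_subG; apply/subsetP=> x; rewrite !inE => /orP[]/eqP->.
    by rewrite mem_gen // inE cycle_id.
  by rewrite mem_gen // inE cycle_id orbT.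
rewrite join_subG !cycle_subG !mem_gen // !inE eqxx ?orbT //.
Qed.

Lemma ccent y : commute c y.
Proof.
case/dprodP: dN => _ defN cGc _.
have : y \in <[c]> * <<[set r; s]>> by rewrite defN inE.
case/mulsgP=> a g /cycleP[e ->] Gg ->.
apply: commuteM; first exact: commuteX.
by apply/commute_sym/(centP (subsetP cGc _ Gg)); rewrite cycle_id.
Qed.

Definition nf e i (j : bool) := c ^+ e * r ^+ i * s ^+ j.

Lemma NF y : exists e i j, y = nf e i j.
Proof.
case/dprodP: dN => _ defN _ _.
have : y \in <[c]> * <<[set r; s]>> by rewrite defN inE.
case/mulsgP=> a g /cycleP[e ->] + ->; rewrite G_eq.
case/mulsgP=> b t /cycleP[i ->] /cycleP[j ->] ->.
exists e, i, (odd j); rewrite /nf mulgA -(expg_mod_order s j) os modn2.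
by case: (odd j).
Qed.

Lemma rinv : r^-1 = r ^+ p.-1.
Proof. by apply/eqP; rewrite eq_invg_mul -expgS prednK ?rp ?p_gt0. Qed.

Lemma sri i : s * r ^+ i = r ^+ (p.-1 * i)%N * s.
Proof.
have h : s * r ^+ i * s = r ^+ (p.-1 * i)%N.
  by rewrite expgM -rinv -srs -{1}sV -mulgA -conjgE conjXg conjgE sV mulgA.
by rewrite -h -mulgA s2 mulg1.
Qed.

Lemma sjr (j : bool) i : s ^+ j * r ^+ i = r ^+ (if j then (p.-1 * i)%N else i) * s ^+ j.
Proof. by case: j; rewrite ?expg1 ?expg0 ?mul1g ?mulg1 // sri. Qed.

Lemma cmove x y e : x * (c ^+ e * y) = c ^+ e * (x * y).
Proof.
have cE : commute x (c ^+ e) by apply: commuteX; apply/commute_sym/ccent.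
by rewrite mulgA cE -mulgA.
Qed.

Lemma sjj (j j' : bool) : s ^+ j * s ^+ j' = s ^+ (j (+) j').
Proof. by case: j; case: j'; rewrite ?expg1 ?expg0 ?mul1g ?mulg1 // s2. Qed.

Lemma nfM e i j e' i' j' :
  nf e i j * nf e' i' j' = nf (e + e') (i + (if j then (p.-1 * i')%N else i')) (j (+) j').
Proof.
rewrite /nf -!mulgA cmove cmove [c ^+ e * (c ^+ e' * _)]mulgA -expgD.
congr (_ * _).
by rewrite [s ^+ j * (r ^+ i' * _)]mulgA sjr -!mulgA sjj mulgA -expgD.
Qed.

Lemma CR1 e i : c ^+ e * r ^+ i = 1 -> c ^+ e = 1 /\ r ^+ i = 1.
Proof.
move=> h.
case/dprodP: dN => _ _ _ tI.
have ce : c ^+ e = (r ^+ i)^-1 by apply/eqP; rewrite eq_mulgV1 invgK h.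
have : c ^+ e \in <[c]> :&: <<[set r; s]>>.
  rewrite inE mem_cycle ce groupV groupX // mem_gen // !inE eqxx //.
rewrite tI => /set1P ce1; split=> //.
by move: ce; rewrite ce1 => /esym/eqP; rewrite eq_invg1 => /eqP.
Qed.

Lemma CRinj e i e' i' : c ^+ e * r ^+ i = c ^+ e' * r ^+ i' ->
  c ^+ e = c ^+ e' /\ r ^+ i = r ^+ i'.
Proof.
move=> h.
case/dprodP: dN => _ _ _ tI.
have E : (c ^+ e')^-1 * c ^+ e = r ^+ i' * (r ^+ i)^-1.
  by rewrite -[c ^+ e](mulgK (r ^+ i)) h !mulgA mulVg mul1g.
have : (c ^+ e')^-1 * c ^+ e \in <[c]> :&: <<[set r; s]>>.
  rewrite inE groupM ?groupV ?mem_cycle //= E groupM ?groupV ?groupX // mem_gen // !inE eqxx //.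
rewrite tI => /set1P E1; split.
  by apply/eqP; rewrite eq_sym eq_mulVg1 E1.
by apply/eqP; rewrite eq_sym eq_mulgV1 -E E1.
Qed.

Definition inK (y : gT) := y ^+ p == 1.

Lemma nfXf a b q : nf a b false ^+ q = nf (a * q)%N (b * q)%N false.
Proof.
rewrite /nf !expg0 !mulg1 expgMn; last first.
  by apply: commuteX; apply/commute_sym/commuteX/commute_sym/ccent.
by rewrite !expgM.
Qed.

Lemma nfp e i : nf (e * p)%N (i * p)%N false = 1.
Proof. by rewrite /nf !expgM expg0 mulg1 (expgAC c) (expgAC r) cp rp !expg1n mulg1. Qed.

Lemma nf_true_neq1 e i : nf e i true != 1.
Proof.
apply/eqP => h.
have hs : s = (nf e i false)^-1.
  by apply/eqP; rewrite eq_sym eq_invg_mul -h /nf expg1 expg0 mulg1.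
have : s ^+ p = 1 by rewrite hs expgVn nfXf nfp invg1.
rewrite sp => s1; move: os; rewrite s1 order1 //.
Qed.

Lemma inK_nf e i j : inK (nf e i j) = ~~ j.
Proof.
rewrite /inK; case: j => /=.
  have -> : p = (1 + p./2.*2)%N by rewrite -{1}(odd_double_half p) odd_p.
  rewrite expgD expg1 -mul2n expgM expg2 nfM nfXf nfM /=.
  exact/negbTE/nf_true_neq1.
by rewrite nfXf nfp eqxx.
Qed.

Lemma inK_nfP y : inK y -> exists e i, y = nf e i false.
Proof.
case: (NF y) => e [i [j ->]]; rewrite inK_nf; case: j => // _.
by exists e, i.
Qed.

Lemma nf_inj e i j e' i' j' : nf e i j = nf e' i' j' ->
  [/\ j = j', c ^+ e = c ^+ e' & r ^+ i = r ^+ i'].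
Proof.
move=> h.
have jj : j = j' by move: (congr1 inK h); rewrite !inK_nf => /negb_inj.
move: h; rewrite -jj /nf => /mulIg /CRinj [h1 h2]; done.
Qed.

Lemma Kmul x z : ~~ inK x -> inK (x * z) = ~~ inK z.
Proof.
case: (NF x) => e [i [j ->]]; case: (NF z) => e' [i' [j' ->]].
rewrite nfM !inK_nf; case: j => //= _; by case: j'.
Qed.

Lemma nf1 : nf 0 0 false = 1.
Proof. by rewrite /nf !expg0 !mulg1. Qed.

Section AutLemmas.
Variable a : {perm gT}.
Hypothesis Aa : a \in Aut [set: gT].
Lemma autM x y : a (x * y) = a x * a y.
Proof. by rewrite -(autmE Aa) morphM ?inE. Qed.
Lemma autX x n : a (x ^+ n) = a x ^+ n.
Proof. by rewrite -(autmE Aa) morphX ?inE. Qed.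
Lemma autV x : a x^-1 = (a x)^-1.
Proof. by rewrite -(autmE Aa) morphV ?inE. Qed.
Lemma aut1 : a 1 = 1.
Proof. by rewrite -(autmE Aa) morph1. Qed.
Lemma autnf e i j : a (nf e i j) = a c ^+ e * a r ^+ i * a s ^+ j.
Proof. by rewrite /nf !autM !autX. Qed.
Lemma autK y : inK (a y) = inK y.
Proof.
rewrite /inK -autX; apply/eqP/eqP => h; last by rewrite h aut1.
by apply: (@perm_inj _ a); rewrite h aut1.
Qed.
End AutLemmas.

Lemma aut_eq a b : a \in Aut [set: gT] -> b \in Aut [set: gT] ->
  a c = b c -> a r = b r -> a s = b s -> a = b.
Proof.
move=> Aa Ab ec er es; apply/permP => y; case: (NF y) => e [i [j ->]].
by rewrite !autnf // ec er es.
Qed.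

Lemma AphiX m : phi ^+ m \in Aut [set: gT].
Proof. exact: groupX. Qed.

Lemma phiX_c m : (phi ^+ m) c = c.
Proof. by elim: m => [|m IH]; rewrite ?expg0 ?perm1 // expgSr permM IH. Qed.
Lemma phiX_r m : (phi ^+ m) r = r.
Proof. by elim: m => [|m IH]; rewrite ?expg0 ?perm1 // expgSr permM IH. Qed.
Lemma phiX_s m : (phi ^+ m) s = r ^+ m * s.
Proof.
elim: m => [|m IH]; first by rewrite !expg0 perm1 mul1g.
by rewrite expgSr permM IH autM // autX // phr phs mulgA -expgSr.
Qed.

Lemma phinf m e i (j : bool) : (phi ^+ m) (nf e i j) = nf e (i + m * j) j.
Proof.
rewrite autnf ?AphiX // phiX_c phiX_r phiX_s /nf.
case: j; rewrite ?expg1 ?expg0 ?muln0 ?muln1 ?addn0 ?mulg1 //.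
by rewrite expgD !mulgA.
Qed.

Lemma phi_p : phi ^+ p = 1.
Proof.
apply/permP => y; case: (NF y) => e [i [j ->]].
rewrite perm1 phinf /nf expgD expgM rp expg1n mulg1 //.
Qed.

Lemma holpM (x y : gT) (f g : {perm gT}) : g \in Aut [set: gT] ->
  holp x f * holp y g = holp (y * g x) (f * g).
Proof. by move=> Ag; apply/permP => n; rewrite permM !holpE permM autM // mulgA. Qed.

Lemma holp1f (f : {perm gT}) : holp 1 f = f.
Proof. by apply/permP => n; rewrite holpE mul1g. Qed.

Definition P e i m := holp (nf e i false) (phi ^+ m).

Lemma PM e i m e' i' m' : P e i m * P e' i' m' = P (e + e') (i + i') (m + m').
Proof.
rewrite /P holpM ?AphiX // -expgD phinf muln0 addn0 nfM /=.
by rewrite addnC [(i' + i)%N]addnC.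
Qed.

Lemma PX e i m n : P e i m ^+ n = P (e * n) (i * n) (m * n).
Proof.
elim: n => [|n IH]; first by rewrite !muln0 expg0 /P nf1 expg0 holp1f.
by rewrite expgSr IH PM !mulnSr.
Qed.

Lemma Pmod e i m : P e i m = P (e %% p) (i %% p) (m %% p).
Proof.
rewrite /P /nf (expg_mod m phi_p) -{1}oc -{1}orr !expg_mod_order //.
Qed.

Lemma Pmod' e i m e' i' m' : e = e' %[mod p] -> i = i' %[mod p] -> m = m' %[mod p] ->
  P e i m = P e' i' m'.
Proof. by move=> h1 h2 h3; rewrite Pmod h1 h2 h3 -Pmod. Qed.

Lemma P1 : P 0 0 0 = 1.
Proof. by rewrite /P nf1 expg0 holp1f. Qed.

Lemma Peval e i m e' i' (j : bool) : P e i m (nf e' i' j) = nf (e + e') (i + (i' + m * j)) j.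
Proof. by rewrite /P holpE phinf nfM. Qed.

Lemma P_Hol e i m : P e i m \in Hol gT.
Proof. rewrite /Hol /P; apply/imset2P; exists (nf e i false) (phi ^+ m); rewrite ?AphiX ?in_setT //. Qed.

Lemma P_inj e i m e' i' m' : P e i m = P e' i' m' ->
  [/\ c ^+ e = c ^+ e', r ^+ i = r ^+ i' & r ^+ m = r ^+ m'].
Proof.
move=> h.
have h0 := congr1 (fun f : {perm gT} => f (nf 0 0 false)) h.
have h1 := congr1 (fun f : {perm gT} => f (nf 0 0 true)) h.
move: h0 h1 => /=; rewrite !Peval !muln0 !muln1 !addn0 !add0n.
case/nf_inj => _ -> ri; case/nf_inj => _ _; rewrite !expgD ri => /mulgI ->.
by split.
Qed.

Lemma nf_r : nf 0 1 false = r.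
Proof. by rewrite /nf expg0 expg1 mul1g mulg1. Qed.
Lemma nf_c : nf 1 0 false = c.
Proof. by rewrite /nf expg0 expg1 !mulg1. Qed.

Section Q.
Variables k l : nat.

Definition Qs : {set {perm gT}} :=
  [set P (val u.2) (val u.1) (k * val u.1 + l * val u.2) | u in [set: 'I_p * 'I_p]].

Lemma Qmem x y : P y x (k * x + l * y) \in Qs.
Proof.
apply/imsetP; exists (Ordinal (ltn_pmod x p_gt0), Ordinal (ltn_pmod y p_gt0)).
  by rewrite inE.
apply: Pmod' => /=; rewrite ?modn_mod //.
by symmetry; rewrite -modnDm !modnMmr modnDm.
Qed.

Lemma QP h : h \in Qs -> exists x y, h = P y x (k * x + l * y).
Proof. by case/imsetP => u _ ->; exists (val u.1), (val u.2). Qed.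

Lemma Q_group : group_set Qs.
Proof.
apply/group_setP; split.
  by have := Qmem 0 0; rewrite !muln0 addn0 P1.
move=> h g /QP[x [y ->]] /QP[x' [y' ->]].
rewrite PM.
have -> : (k * x + l * y + (k * x' + l * y') = k * (x + x') + l * (y + y'))%N.
  by rewrite !mulnDr addnACA.
exact: Qmem.
Qed.

Canonical Qg := Group Q_group.

Lemma Akl_Q : Akl r c phi k l = Qs.
Proof.
apply/eqP; rewrite eqEsubset; apply/andP; split.
  rewrite gen_subG; apply/subsetP => h; rewrite !inE => /orP[]/eqP->.
    have := Qmem 1 0; rewrite muln0 muln1 addn0 /P nf_r //.
  have := Qmem 0 1; rewrite muln0 muln1 add0n /P nf_c //.
apply/subsetP => h /QP[x [y ->]].
have -> : P y x (k * x + l * y) = P 0 1 k ^+ x * P 1 0 l ^+ y.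
  by rewrite !PX PM !mul0n !mul1n add0n addn0.
rewrite groupM // groupX // mem_gen // !inE /P ?nf_r ?nf_c eqxx ?orbT //.
Qed.

Lemma card_Q : #|Qs| = (p ^ 2)%N.
Proof.
rewrite card_imset; first by rewrite cardsT card_prod card_ord mulnn.
move=> [u1 u2] [v1 v2] /P_inj [] /= h1 h2 _.
move/eqP: h1; rewrite eq_expg_mod_order oc !modn_small // => /eqP h1.
move/eqP: h2; rewrite eq_expg_mod_order orr !modn_small // => /eqP h2.
by congr (_, _); apply: val_inj.
Qed.

Lemma Q_abelem : p.-abelem Qs.
Proof.
rewrite abelemE //; apply/andP; split.
  apply/centsP => h /QP[x [y ->]] g /QP[x' [y' ->]].
  by rewrite /commute !PM addnC [(x' + _)%N]addnC [(_ + (k * x + _))%N]addnC.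
apply/exponentP => h /QP[x [y ->]].
rewrite PX Pmod !modnMl -P1 //.
Qed.

End Q.

Lemma card_ZpZp : #|[set: 'Z_p * 'Z_p]| = (p ^ 2)%N.
Proof. by rewrite cardsT card_prod card_ord Zp_cast ?p_gt1 // mulnn. Qed.

Lemma expg_pair (u : 'Z_p * 'Z_p) n : u ^+ n = (u.1 ^+ n, u.2 ^+ n).
Proof.
elim: n => [|n IH]; first by rewrite !expg0; case: u.
by rewrite !expgS IH.
Qed.

Lemma ZpZp_abelem : p.-abelem [set: 'Z_p * 'Z_p].
Proof.
rewrite abelemE //; apply/andP; split.
  apply/centsP => [[u1 u2]] _ [v1 v2] _.
  by rewrite /commute; congr (_, _); apply: Zp_mulgC.
apply/exponentP => u _.
have e1 (z : 'Z_p) : z ^+ p = 1.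
  have := expg_cardG (in_setT z); rewrite cardsT card_ord Zp_cast ?p_gt1 //.
by rewrite expg_pair !e1; case: u.
Qed.

Lemma Q_isog k l : Qs k l \isog [set: 'Z_p * 'Z_p].
Proof.
by rewrite (isog_abelem_card _ (Q_abelem k l)) ZpZp_abelem card_ZpZp card_Q eqxx.
Qed.

Lemma modlin a b x y x0 y0 : x = x0 %[mod p] -> y = y0 %[mod p] ->
  (a * x + b * y = a * x0 + b * y0 %[mod p])%N.
Proof.
by move=> hx hy; rewrite -modnDm -(modnMmr a) -(modnMmr b) hx hy !modnMmr modnDm.
Qed.

Lemma dvd_mod0 m : p %| m -> m %% p = 0.
Proof. by move/eqP. Qed.

Lemma Q_semireg k l : k <= p - 2 -> hol_semiregular (Qs k l).
Proof.
move=> hk h n /QP[x [y ->]]; case: (NF n) => e [i [j ->]].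
rewrite Peval => /nf_inj [_ h1 h2].
have cy : c ^+ y = 1 by apply: (mulIg (c ^+ e)); rewrite -expgD h1 mul1g.
have rx : r ^+ (x + (k * x + l * y) * j) = 1.
  apply: (mulIg (r ^+ i)); rewrite -expgD mul1g -h2; congr (_ ^+ _); lia.
have py : p %| y by rewrite -oc order_dvdn cy.
have px : p %| x.
  move: rx => /eqP; rewrite -order_dvdn orr; clear h1 h2.
  case: j => /=; last by rewrite muln0 addn0.
  rewrite muln1 addnA (dvdn_addl _ (dvdn_mull _ py)).
  have -> : (x + k * x = x * k.+1)%N by rewrite mulnSr addnC mulnC.
  rewrite Euclid_dvdM // => /orP[] // /dvdn_leq; lia.
rewrite Pmod !dvd_mod0 ?P1 //.
by rewrite dvdn_add // dvdn_mull.
Qed.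

Lemma Q_distinct k l k' l' : k < p -> l < p -> k' < p -> l' < p ->
  Qs k l = Qs k' l' -> k = k' /\ l = l'.
Proof.
move=> hk hl hk' hl' E.
split.
  have := Qmem k l 1 0; rewrite E => /QP[x [y]] /P_inj [h1 h2 h3].
  move/eqP: h1; rewrite eq_expg_mod_order oc => /eqP h1.
  move/eqP: h2; rewrite eq_expg_mod_order orr => /eqP h2.
  move/eqP: h3; rewrite eq_expg_mod_order orr (modlin k' l' (esym h2) (esym h1)).
  by rewrite !muln1 !muln0 !addn0 !modn_small // => /eqP.
have := Qmem k l 0 1; rewrite E => /QP[x [y]] /P_inj [h1 h2 h3].
move/eqP: h1; rewrite eq_expg_mod_order oc => /eqP h1.
move/eqP: h2; rewrite eq_expg_mod_order orr => /eqP h2.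
move/eqP: h3; rewrite eq_expg_mod_order orr (modlin k' l' (esym h2) (esym h1)).
by rewrite !muln1 !muln0 !add0n !modn_small // => /eqP.
Qed.

Lemma dvd2 x : p %| (x + x)%N -> p %| x.
Proof.
rewrite addnn -mul2n Euclid_dvdM // => /orP[] // /dvdn_leq; have := p_gt2; lia.
Qed.

Lemma c2 x : c ^+ (x + x) = 1 -> c ^+ x = 1.
Proof. by move/eqP; rewrite -order_dvdn oc => /dvd2; rewrite -oc order_dvdn => /eqP. Qed.

Lemma central_c z : (forall y, commute z y) -> exists e, z = c ^+ e.
Proof.
case: (NF z) => e [i [j ->]] cz; case: j cz => cz.
  have := cz (nf 0 1 false); rewrite /commute !nfM /= => /nf_inj [_ _].
  move/eqP; rewrite eq_expg_mod_order orr muln1 addnC eqn_modDr.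
  rewrite !modn_small ?prednK ?p_gt0 //; last by have := p_gt2; lia.
  move/eqP => h; have := p_gt2; lia.
have := cz (nf 0 0 true); rewrite /commute !nfM /= => /nf_inj [_ _].
move/eqP; rewrite eq_expg_mod_order orr addn0 add0n => /eqP h.
have h2 : (i + i) %% p = 0.
  by rewrite -modnDml h modnDml -mulSnr prednK ?p_gt0 // modnMr.
have pi : p %| i by apply: dvd2; rewrite /dvdn h2.
exists e; rewrite /nf expg0 mulg1.
by move: pi; rewrite -orr order_dvdn => /eqP ->; rewrite mulg1.
Qed.

Lemma aut_form a : a \in Aut [set: gT] -> a ^+ (p ^ 2) = 1 -> exists j, a = phi ^+ j.
Proof.
move=> Aa ap.
have [ea Hc] : exists ea, a c = c ^+ ea.
  apply: central_c => y.
  rewrite /commute -{1 2}(permKV a y) -!autM //.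
  by rewrite (ccent (a^-1 y)).
have [f [j [t Hs]]] := NF (a s).
have t1 : t = true.
  have := autK Aa s; rewrite Hs inK_nf.
  have -> : s = nf 0 0 true by rewrite /nf !expg0 expg1 !mul1g.
  by rewrite inK_nf; case: t {Hs}.
subst t.
have cf : c ^+ f = 1.
  have : a s ^+ 2 = 1 by rewrite -autX // expg2 s2 aut1.
  rewrite Hs expg2 nfM /= => h; case/nf_inj: (etrans h (esym nf1)) => _ + _.
  by rewrite expg0; apply: c2.
have Hs' : a s = r ^+ j * s by rewrite Hs /nf cf mul1g expg1.
have [e [b Hr]] : exists e b, a r = nf e b false.
  apply: inK_nfP; rewrite autK //.
  by rewrite -nf_r inK_nf.
have ce : c ^+ e = 1.
  have : a s * a r * a s * a r = 1.
    by rewrite -!autM // srs mulVg aut1.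
  have -> : a s = nf 0 j true by rewrite Hs' /nf expg0 mul1g expg1.
  rewrite Hr !nfM /= add0n addn0 => h; case/nf_inj: (etrans h (esym nf1)) => _ + _.
  by rewrite expg0; apply: c2.
have Hr' : a r = r ^+ b by rewrite Hr /nf ce mul1g expg0 mulg1.
have itc n : (a ^+ n) c = c ^+ (ea ^ n).
  elim: n => [|n IH]; first by rewrite expg0 perm1 expn0 expg1.
  by rewrite expgSr permM IH autX // Hc -expgM expnS mulnC.
have itr n : (a ^+ n) r = r ^+ (b ^ n).
  elim: n => [|n IH]; first by rewrite expg0 perm1 expn0 expg1.
  by rewrite expgSr permM IH autX // Hr' -expgM expnS mulnC.
have ferm2 x : x ^ (p ^ 2) = x %[mod p].
  by rewrite expnS expn1 expnM !(fermat _ pr_p).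
have Hc1 : a c = c.
  have := itc (p ^ 2)%N; rewrite ap perm1 => /esym/eqP.
  rewrite -{2}(expg1 c) eq_expg_mod_order oc ferm2 => /eqP h.
  by rewrite Hc -(expg_mod_order c ea) oc h modn_small ?p_gt1 // expg1.
have Hr1 : a r = r.
  have := itr (p ^ 2)%N; rewrite ap perm1 => /esym/eqP.
  rewrite -{2}(expg1 r) eq_expg_mod_order orr ferm2 => /eqP h.
  by rewrite Hr' -(expg_mod_order r b) orr h modn_small ?p_gt1 // expg1.
exists j; apply: aut_eq => //; first exact: AphiX.
- by rewrite phiX_c.
- by rewrite phiX_r.
- by rewrite phiX_s.
Qed.

Lemma holpX (x : gT) a n : a \in Aut [set: gT] -> exists y, holp x a ^+ n = holp y (a ^+ n).
Proof.
move=> Aa; elim: n => [|n [y IH]]; first by exists 1; rewrite !expg0 holp1f.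
by exists (x * a y); rewrite expgSr IH holpM // expgSr.
Qed.

Lemma conv (H : {group {perm gT}}) : H \subset Hol gT -> #|H| = (p ^ 2)%N ->
  hol_semiregular H ->
  exists k l, [/\ k <= p - 2, l <= p - 1 & H :=: Akl r c phi k l].
Proof.
move=> sH cH sreg.
have inj : {in H &, injective (fun h : {perm gT} => h 1)}.
  move=> h1 h2 H1 H2 /= e; apply/eqP; rewrite eq_mulgV1; apply/eqP.
  apply: (sreg _ 1); first by rewrite groupM ?groupV.
  by rewrite permM e -permM mulgV perm1.
have form h : h \in H -> exists x a, a \in Aut [set: gT] /\ h = holp x a.
  by move/(subsetP sH)/imset2P => [x a _ Aa ->]; exists x, a.
have hp h : h \in H -> h ^+ (p ^ 2) = 1 by move=> Hh; rewrite -cH expg_cardG.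
have h1 h : h \in H -> inK (h 1).
  move=> Hh; have [x [a [Aa eh]]] := form h Hh.
  have -> : h 1 = x by rewrite eh holpE aut1 // mulg1.
  apply/negPn/negP => nx.
  have step y : h y = x * a y by rewrite eh holpE.
  have it n : inK ((h ^+ n) 1) = ~~ odd n.
    elim: n => [|n IH]; first by rewrite expg0 perm1 /inK expg1n eqxx.
    by rewrite expgSr permM step Kmul // autK // IH oddS.
  have := it (p ^ 2)%N; rewrite hp // perm1 /inK expg1n eqxx oddX odd_p orbT //.
pose Cset := [set nf (val u.1) (val u.2) false | u in [set: 'I_p * 'I_p]].
have cC : #|Cset| <= p ^ 2.
  by apply: leq_trans (leq_imset_card _ _) _; rewrite cardsT card_prod card_ord mulnn.
have sub : ((fun h : {perm gT} => h 1) @: H) \subset Cset.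
  apply/subsetP => y /imsetP [h Hh ->].
  have [e [i ->]] := inK_nfP (h1 h Hh).
  apply/imsetP; exists (Ordinal (ltn_pmod e p_gt0), Ordinal (ltn_pmod i p_gt0)).
    by rewrite inE.
  by rewrite /nf /= -{1}oc -{1}orr !expg_mod_order.
have EC : ((fun h : {perm gT} => h 1) @: H) = Cset.
  apply/eqP; rewrite eqEcard sub (card_in_imset inj) cH //.
have getP (e i : 'I_p) : exists2 h, h \in H & h 1 = nf e i false.
  have : nf e i false \in Cset by apply/imsetP; exists (e, i); rewrite ?inE.
  by rewrite -EC => /imsetP [h Hh ->]; exists h.
have shapeH (e i : 'I_p) h : h \in H -> h 1 = nf e i false ->
    exists m, m < p /\ h = P e i m.
  move=> Hh eh; have [x [a [Aa hE]]] := form h Hh.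
  have xE : x = nf e i false by rewrite -eh hE holpE aut1 // mulg1.
  have [y hy] := holpX x (p ^ 2) Aa.
  have ap : a ^+ (p ^ 2) = 1.
    have := hp h Hh; rewrite hE hy => e1.
    have y1 : y = 1 by have := congr1 (fun f : {perm gT} => f 1) e1; rewrite holpE aut1 ?groupX // mulg1 perm1.
    by move: e1; rewrite y1 holp1f.
  have [j aj] := aut_form Aa ap.
  exists (j %% p); split; first exact: ltn_pmod p_gt0.
  by rewrite hE xE aj -/(P e i j) (Pmod e i j) (Pmod e i (j %% p)) modn_mod.
have [hr Hr er] := getP (Ordinal p_gt0) (Ordinal p_gt1).
have [hc Hc ec] := getP (Ordinal p_gt1) (Ordinal p_gt0).
have [k [kp kE]] := shapeH _ _ _ Hr er.
have [l [lp lE]] := shapeH _ _ _ Hc ec.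
move: kE lE => /= kE lE.
have kne : k != p.-1.
  apply/eqP => kE'.
  have : hr (nf 0 0 true) = nf 0 0 true.
    rewrite kE Peval muln1 add0n kE' -[(1 + p.-1)%N]/(p.-1.+1) prednK ?p_gt0 //.
    by rewrite /nf rp.
  move/(sreg _ _ Hr); rewrite kE -P1 => /P_inj [_ + _].
  rewrite expg1 expg0 => r1; move: orr; rewrite r1 order1 => p1.
  by have := p_gt1; rewrite -p1.
exists k, l; split; first by have := p_gt2; lia.
  by have := p_gt2; lia.
rewrite Akl_Q; apply/eqP; rewrite eq_sym eqEcard card_Q cH leqnn andbT.
rewrite -Akl_Q gen_subG; apply/subsetP => h; rewrite !inE => /orP[]/eqP->.
  by rewrite -nf_r -/(P 0 1 k) -kE.
by rewrite -nf_c -/(P 1 0 l) -lE.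
Qed.

Lemma main_sec :
  [/\ (forall k l, k <= p - 2 -> l <= p - 1 ->
         Akl r c phi k l \isog [set: 'Z_p * 'Z_p]),
      (forall k l k' l', k <= p - 2 -> l <= p - 1 -> k' <= p - 2 -> l' <= p - 1 ->
         Akl r c phi k l = Akl r c phi k' l' -> k = k' /\ l = l')
    & (forall H : {group {perm gT}},
         (H \subset Hol gT) /\ #|H| = (p ^ 2)%N /\ hol_semiregular H
         <-> exists k l, [/\ k <= p - 2, l <= p - 1 & (H :=: Akl r c phi k l)])].
Proof.
split.
- by move=> k l _ _; rewrite Akl_Q; apply: Q_isog.
- move=> k l k' l' hk hl hk' hl'; rewrite !Akl_Q; apply: Q_distinct;
    have := p_gt2; lia.
move=> H; split.
  by case=> [sH [cH sr]]; apply: conv.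
case=> [k [l [hk hl E]]]; rewrite E Akl_Q; split.
  by apply/subsetP => h /QP [x [y ->]]; apply: P_Hol.
by split; [apply: card_Q | apply: Q_semireg].
Qed.
End Main.

Theorem lemma17 (p : nat) (gT : finGroupType) (c r s : gT) (phi : {perm gT}) :
  prime p -> odd p ->
  (* N = [set: gT] = C_p x D_2p with C_p = <c>, D_2p = <r, s | r^p = s^2 = 1, srs = r^-1> *)
  (<[c]> \x <<[set r; s]>>)%g = [set: gT] ->
  #[c]%g = p -> #[r]%g = p -> #[s]%g = 2 -> (s * r * s = r^-1)%g ->
  (* phi in Aut(N) with phi(r) = r, phi(s) = rs, phi(c) = c *)
  phi \in Aut [set: gT] -> phi r = r -> phi s = (r * s)%g -> phi c = c ->
  [/\ (forall k l, k <= p - 2 -> l <= p - 1 ->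
         Akl r c phi k l \isog [set: 'Z_p * 'Z_p]),
      (forall k l k' l', k <= p - 2 -> l <= p - 1 -> k' <= p - 2 -> l' <= p - 1 ->
         Akl r c phi k l = Akl r c phi k' l' -> k = k' /\ l = l')
    & (forall H : {group {perm gT}},
         (H \subset Hol gT) /\ #|H| = p ^ 2 /\ hol_semiregular H
         <-> exists k l, [/\ k <= p - 2, l <= p - 1 & (H :=: Akl r c phi k l)])].
Proof.
move=> pr od dN oc orr os srs Aphi phr phs phc.
exact: (main_sec pr od dN oc orr os srs Aphi phr phs phc).
Qed.
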